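(* Let $n\ge3$ and $u\ge2$ be integers with $\gcd(u,n)=1$, and let $a$ be a square-free rational integer such that every prime divisor of $n$ divides $a$. Let $F(x)=x^n-a^u\in\mathbb{Z}[x]$. Then $F(x)$ is irreducible over $\mathbb{Q}$. Moreover, letting $K=\mathbb{Q}(\alpha)$ with $\alpha$ a root of $F(x)$ and $\mathbb{Z}_K$ the ring of integers of $K$: (1) $\mathbb{Z}[\alpha]\neq\mathbb{Z}_K$; (2) there exists $\theta\in\mathbb{Z}_K$ with $K=\mathbb{Q}(\theta)$ and $\mathbb{Z}_K=\mathbb{Z}[\theta]$; that is, $K$ is monogenic.
   Context: A number field $K$ is monogenic if there is $\theta\in\mathbb{Z}_K$ such that $\{1,\theta,\dots,\theta^{[K:\mathbb{Q}]-1}\}$ is a $\mathbb{Z}$-basis of $\mathbb{Z}_K$. *)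

(* Defs.v *)
(* number fields realised as subfields of algC. *)
From mathcomp Require Import all_boot all_order all_algebra all_field.
Set Implicit Arguments. Unset Strict Implicit. Unset Printing Implicit Defensive.
Import Order.TTheory GRing.Theory Num.Theory.
Local Open Scope ring_scope.

Definition Fpoly (n u : nat) (a : int) : {poly rat} :=
  'X^n - ((a ^+ u)%:~R)%:P.

Definition squarefree_int (a : int) : Prop :=
  a != 0 /\ forall p : nat, prime p -> ~~ ((p * p)%N %| `|a|%N)%N.

(* Q(t) as a subset of algC: values of rational polynomials at t. *)
Definition Qadj (t x : algC) : Prop :=
  exists p : {poly rat}, x = (map_poly ratr p).[t].

(* Z[t]: values of integer polynomials at t. *)
Definition Zadj (t x : algC) : Prop :=
  exists p : {poly int}, x = (map_poly intr p).[t].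

Definition ZK (t x : algC) : Prop := Qadj t x /\ x \in Aint.

(* Main.v *)
Require Import Defs.
From mathcomp Require Import all_boot all_order all_algebra all_field.
From mathcomp Require Import ring zify.
Set Implicit Arguments. Unset Strict Implicit. Unset Printing Implicit Defensive.
Import Order.TTheory GRing.Theory Num.Theory.
Local Open Scope ring_scope.

Lemma irr_root_dvd (p q : {poly rat}) (x : algC) : irreducible_poly p ->
  root (map_poly ratr p) x -> root (map_poly ratr q) x -> p %| q.
Proof.
move=> irr_p px0 qx0.
suffices /eqp_dvdl <-: gcdp p q %= p by apply: dvdp_gcdr.
have p0 : p != 0.
  by apply/eqP=> p0; move: irr_p => [+ _]; rewrite p0 size_poly0.
rewrite irr_p ?dvdp_gcdl ?gtn_eqF // -(size_map_poly (ratr : rat -> algC)) gcdp_map /=.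
rewrite (@root_size_gt1 _ x) ?root_gcd ?px0 //.
by rewrite gcdp_eq0 negb_and map_poly_eq0 p0.
Qed.

Lemma logn_a (a : int) (p : nat) : prime p -> (p%:Z %| a)%Z ->
  ~~ ((p * p) %| `|a|)%N -> a != 0 -> logn p `|a| = 1%N.
Proof.
move=> pp pa pa2 a0.
have a0' : (0 < `|a|)%N by rewrite absz_gt0.
apply/eqP; rewrite eqn_leq; apply/andP; split.
  rewrite leqNgt; apply/negP => H; move: pa2.
  have : (p ^ 2 %| `|a|)%N by rewrite (pfactor_dvdn 2 pp a0').
  by rewrite expnS expn1 => ->.
by rewrite -(pfactor_dvdn 1 pp a0') expn1.
Qed.

Lemma fin (p N : nat) (c R : int) : prime p -> R != 0 -> (logn p `|R| < N)%N ->
  ((c%:~R) ^+ N * R%:~R / (p%:R) ^+ N : algC) \in Aint -> (p%:Z %| c)%Z.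
Proof.
move=> pp R0 lR xA.
have xQ : ((c%:~R) ^+ N * R%:~R / (p%:R) ^+ N : algC) \in Crat.
  by rewrite rpredM ?rpredV ?rpredX ?rpredM ?rpredX ?rpred_int ?rpred_nat.
have := Cint_rat_Aint xQ xA; case/intrP => m Em.
have p0 : (p%:R : algC) != 0 by rewrite pnatr_eq0 -lt0n prime_gt0.
have E : m * (p%:Z) ^+ N = c ^+ N * R.
  apply: (@intr_inj algC); rewrite rmorphM rmorphM /= !rmorphXn /= -Em.
  by rewrite divfK // expf_neq0.
apply/negPn/negP => ndvd.
have c0 : c != 0 by apply: contraNneq ndvd => ->; rewrite dvdz0.
have m0 : m != 0.
  apply: contraNneq c0 => m0; move: E; rewrite m0 mul0r => /eqP.
  by rewrite eq_sym mulf_eq0 (negbTE R0) orbF expf_eq0 => /andP[_ ->].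
have := congr1 (fun z => logn p `|z|) E => /=.
rewrite !abszM !abszX /= lognM ?expn_gt0 ?absz_gt0 ?prime_gt0 ?c0 //.
rewrite lognM ?expn_gt0 ?absz_gt0 ?prime_gt0 ?c0 ?m0 ?R0 //.
rewrite pfactorK // lognX (@logn_coprime p `|c|) ?muln0 ?add0n; last first.
  by rewrite prime_coprime.
move=> E2; move: lR; rewrite -E2.
by rewrite ltnNge leq_addl.
Qed.

Lemma NT (t : rat) (n u m : nat) (a : int) (p : nat) (s : bool) :
  (0 < n)%N -> prime p -> (p%:Z %| a)%Z -> ~~ ((p * p) %| `|a|)%N -> a != 0 ->
  t ^+ n = ((-1) ^+ s * (a ^+ u)%:~R) ^+ m -> (n %| u * m)%N.
Proof.
move=> n0 pp pa pa2 a0 E.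
have la := logn_a pp pa pa2 a0.
set N := numq t; set D := denq t.
have E2 : N ^+ n = ((-1) ^+ s * a ^+ u) ^+ m * D ^+ n.
  apply: (@intr_inj rat _ _ _); rewrite rmorphXn /= numqE exprMn E.
  rewrite rmorphM /= !rmorphXn /= rmorphM /= rmorphXn /= rmorphN rmorph1.
  by rewrite rmorphXn.
have Dp : (0 < `|D|)%N by rewrite absz_gt0 denq_neq0.
have Np : (0 < `|N|)%N.
  rewrite absz_gt0; apply/eqP => N0; move: E2; rewrite N0 expr0n.
  rewrite (gtn_eqF n0) => /eqP; rewrite eq_sym mulf_eq0 !expf_eq0 denq_eq0 mulf_eq0 signr_eq0 expf_eq0 (negbTE a0) !andbF //.
have ap : (0 < `|a|)%N by rewrite absz_gt0.
have E3 := congr1 (fun z => logn p `|z|) E2; move: E3 => /=.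
rewrite abszM !abszX abszMsign abszX -expnM.
rewrite lognM ?expn_gt0 ?Dp ?ap // !lognX la muln1 => E3.
have -> : (u * m = n * (logn p `|N|) - n * logn p `|D|)%N.
  by rewrite E3 mulnC addnK.
by rewrite -mulnBr dvdn_mulr.
Qed.

Lemma irr_pure (n u : nat) (a : int) (p : nat) : (0 < n)%N -> coprime u n ->
  prime p -> (p%:Z %| a)%Z -> ~~ ((p * p) %| `|a|)%N -> a != 0 ->
  irreducible_poly ('X^n - ((a ^+ u)%:~R)%:P : {poly rat}).
Proof.
move=> n0 cun pp pa pa2 a0.
set c := ((a ^+ u)%:~R : rat); set H := 'X^n - c%:P.
have szH : size H = n.+1 := size_XnsubC _ n0.
split; first by rewrite szH ltnS.
move=> q szq qH.
have H0 : H != 0 by rewrite -size_poly_eq0 szH.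
have q0 : q != 0 by apply: contraNneq H0 => q0; rewrite -(dvd0p H) -q0.
rewrite -dvdp_size_eqp // szH.
set m := (size q).-1.
have szq' : size q = m.+1 by rewrite prednK // size_poly_gt0.
have m1 : (0 < m)%N by move: szq; rewrite szq' lt0n; apply: contra => /eqP ->.
have mn : (m <= n)%N by have := dvdp_leq H0 qH; rewrite szq' szH.
suff nm : (n %| m)%N.
  by rewrite szq' eqSS eqn_leq mn (dvdn_leq m1 nm).
rewrite -(@Gauss_dvdr n u m); last by rewrite coprime_sym.
set Q := map_poly (ratr : rat -> algC) q.
have [r Dr] := closed_field_poly_normal Q.
have lQ0 : lead_coef Q != 0 by rewrite lead_coef_eq0 map_poly_eq0.
have szr : size r = m.
  have : size Q = m.+1 by rewrite size_map_poly.
  by rewrite Dr size_scale // size_prod_XsubC => -[].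
have rootr : forall z, z \in r -> z ^+ n = ratr c.
  move=> z zr.
  have : root Q z by rewrite Dr rootZ // root_prod_XsubC.
  have QH : Q %| map_poly (ratr : rat -> algC) H by rewrite dvdp_map.
  move/(root_dvdp QH).
  rewrite /H rmorphB /= map_polyXn map_polyC /= rootE !hornerE.
  by rewrite subr_eq0 => /eqP.
set t := q.[0] / lead_coef q.
have Et : ratr t = \prod_(z <- r) (- z).
  rewrite fmorph_div /= -horner_map /= rmorph0 -lead_coef_map -/Q.
  rewrite {1}Dr hornerZ mulrC mulrA mulVf // mul1r horner_prod.
  by apply: eq_bigr => z _; rewrite !hornerE.
have Etn : t ^+ n = ((-1) ^+ odd n * c) ^+ m.
  apply: (fmorph_inj (ratr : rat -> algC)).
  rewrite rmorphXn /= Et -prodrXl.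
  rewrite (@eq_big_seq _ _ _ _ _ _ (fun _ => (-1) ^+ n * ratr c)); last first.
    by move=> z zr /=; rewrite -(rootr z zr); apply: exprNn.
  rewrite big_const_seq count_predT iter_mulr_1 szr.
  by rewrite rmorphXn /= rmorphM /= rmorphXn /= rmorphN rmorph1 signr_odd.
exact: (NT n0 pp pa pa2 a0 Etn).
Qed.

Definition Gp (n : nat) (a : int) : {poly rat} := 'X^n - ((a%:~R : rat))%:P.

Lemma map_Gp n a : map_poly (ratr : rat -> algC) (Gp n a) = 'X^n - (a%:~R)%:P.
Proof. by rewrite /Gp rmorphB /= map_polyXn map_polyC /= rmorph_int. Qed.

Lemma root_Gp n a (w : algC) : w ^+ n = a%:~R -> root (map_poly ratr (Gp n a)) w.
Proof. by move=> Hw; rewrite map_Gp rootE !hornerE Hw subrr. Qed.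

Lemma conj_root (n : nat) (a : int) (th w : algC) (q : {poly rat}) :
  irreducible_poly (Gp n a) -> th ^+ n = a%:~R -> w ^+ n = a%:~R ->
  (map_poly ratr q).[th] = 0 -> (map_poly ratr q).[w] = 0.
Proof.
move=> irr Hth Hw q0.
have /dvdpP[r ->] : Gp n a %| q.
  by apply: (irr_root_dvd irr (root_Gp Hth)); rewrite /root q0.
by rewrite rmorphM hornerM; have /eqP -> := root_Gp Hw; rewrite mulr0.
Qed.

Lemma conj_Aint (n : nat) (a : int) (th w : algC) (g : {poly rat}) :
  irreducible_poly (Gp n a) -> th ^+ n = a%:~R -> w ^+ n = a%:~R ->
  (map_poly ratr g).[th] \in Aint -> (map_poly ratr g).[w] \in Aint.
Proof.
move=> irr Hth Hw yA.
set y := (map_poly ratr g).[th].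
have [P [DP monP] dvP] := minCpolyP y.
have Py : (map_poly ratr P).[y] = 0.
  by apply/eqP; rewrite -/(root _ y) dvP dvdpp.
have Pc : (map_poly ratr (P \Po g)).[th] = 0 by rewrite map_comp_poly horner_comp.
have := conj_root irr Hth Hw Pc; rewrite map_comp_poly horner_comp => Pw.
apply: (@root_monic_Aint (minCpoly y)).
- by rewrite DP /root Pw.
- by rewrite DP map_monic.
- exact: yA.
Qed.

Lemma reduce (n : nat) (a : int) (th : algC) (q : {poly rat}) : (0 < n)%N ->
  th ^+ n = a%:~R -> exists c : nat -> rat,
  (map_poly ratr q).[th] = \sum_(i < n) ratr (c i) * th ^+ i.
Proof.
move=> n0 Hth.
have monG : Gp n a \is monic by apply: monicXnsubC.
have szG : size (Gp n a) = n.+1 by apply: size_XnsubC.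
exists (fun i => (q %% Gp n a)`_i).
rewrite {1}(divp_eq q (Gp n a)) rmorphD rmorphM /= hornerD hornerM.
have /eqP -> := root_Gp Hth; rewrite mulr0 add0r.
rewrite (@horner_coef_wide _ n); last by rewrite size_map_poly -ltnS -szG ltn_modp monic_neq0.
by apply: eq_bigr => i _; rewrite coef_map.
Qed.

Lemma natzR (R : pzRingType) (p : nat) : ((p%:Z)%:~R : R) = p%:R.
Proof. by []. Qed.

Lemma P_eis (n : nat) (a : int) (th : algC) (p : nat) (c : nat -> int) :
  (0 < n)%N -> th ^+ n = a%:~R -> prime p -> (p%:Z %| a)%Z ->
  ~~ ((p * p) %| `|a|)%N -> a != 0 -> th \in Aint ->
  (\sum_(i < n) (c i)%:~R * th ^+ i) / p%:R \in Aint ->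
  forall j, (j < n)%N -> (p%:Z %| c j)%Z.
Proof.
move=> n0 Hth pp pa pa2 a0 thA yA.
have p0 : (p%:R : algC) != 0 by rewrite pnatr_eq0 -lt0n prime_gt0.
have [b Eb] := dvdzP pa.
elim/ltn_ind => j IH jn.
have zA := rpredM (rpredX (n.-1 - j) thA) yA.
have Ez : th ^+ (n.-1 - j) * ((\sum_(i < n) (c i)%:~R * th ^+ i) / p%:R) =
    \sum_(i < n) (c i)%:~R / p%:R * th ^+ (i + (n.-1 - j)).
  rewrite mulrCA mulr_suml; apply: eq_bigr => i _; rewrite exprD; ring.
rewrite Ez (bigD1 (Ordinal jn)) //= in zA.
have RA : \sum_(i < n | i != Ordinal jn) (c i)%:~R / p%:R * th ^+ (i + (n.-1 - j)) \in Aint.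
  apply: rpred_sum => i /= ij.
  have [ltij | ltji | eqij] := ltngtP i j.
  - have [d Ed] := dvdzP (IH i ltij (ltn_trans ltij jn)).
    rewrite Ed rmorphM /= natzR mulrK ?unitfE //.
    by rewrite rpredM ?Aint_int ?rpredX.
  - have -> : (i + (n.-1 - j) = n + (i.-1 - j))%N.
      by move: (ltn_ord i) ltji; lia.
    rewrite exprD Hth Eb rmorphM /=.
    have -> : (c i)%:~R / p%:R * ((b%:~R * (p%:Z)%:~R) * th ^+ (i.-1 - j)) =
        (c i)%:~R * b%:~R * th ^+ (i.-1 - j) :> algC.
      by rewrite natzR; field.
    by rewrite rpredM ?rpredX // rpredM ?Aint_int.
  - by move: ij; rewrite -val_eqE /= eqij eqxx.
have wA := rpredB zA RA; rewrite addrK in wA.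
have E1 : (j + (n.-1 - j))%N = n.-1 by move: (jn); lia.
rewrite E1 in wA.
have wnA := rpredX n wA.
apply: (@fin p n (c j) (a ^+ n.-1) pp); first by rewrite expf_neq0.
  by rewrite abszX lognX (logn_a pp pa pa2 a0) muln1 prednK ?leqnn.
have -> : (c j)%:~R ^+ n * (a ^+ n.-1)%:~R / p%:R ^+ n =
   ((c j)%:~R / p%:R * th ^+ n.-1) ^+ n :> algC.
  rewrite exprMn -exprM mulnC exprM Hth rmorphXn /=; by rewrite expr_div_n mulrAC.
exact: wnA.
Qed.

Lemma unity_sum (n : nat) (z : algC) (m : nat) : n.-primitive_root z ->
  \sum_(k < n) (z ^+ m) ^+ k = if (n %| m)%N then n%:R else 0.
Proof.
move=> zp; rewrite (prim_order_dvd zp); case: ifP => [/eqP -> | H].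
  rewrite (eq_bigr (fun _ => 1)); last by move=> i _; apply: expr1n.
  by rewrite sumr_const card_ord.
have x1 : z ^+ m - 1 != 0 by rewrite subr_eq0 H.
have : (z ^+ m) ^+ n - 1 = 0.
  have -> : (z ^+ m) ^+ n = 1 by rewrite exprAC (prim_expr_order zp); apply: expr1n.
  by rewrite subrr.
by rewrite subrX1 => /eqP; rewrite mulf_eq0 (negbTE x1) => /eqP.
Qed.

Lemma dvd_shift (n i j : nat) : (i < n)%N -> (j < n)%N ->
  (n %| i + (n - j))%N = (i == j).
Proof.
move=> ilt jlt; case: (ltngtP i j) => H.
- rewrite gtnNdvd //; [by move: H; lia | by move: H ilt jlt; lia].
- have -> : (i + (n - j) = n + (i - j))%N by move: H jlt; lia.
  rewrite dvdn_addr // gtnNdvd //; [by move: H; lia | by move: ilt; lia].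
- by rewrite H subnKC ?dvdnn ?eqxx // ltnW.
Qed.

Lemma horner_pdiv (n p : nat) (c : nat -> int) (x : algC) :
  (map_poly ratr (\poly_(i < n) ((c i)%:~R / p%:R : rat))).[x] =
  \sum_(i < n) (c i)%:~R / p%:R * x ^+ i.
Proof.
rewrite (@horner_coef_wide _ n) ?size_map_poly ?size_poly //.
apply: eq_bigr => i _; rewrite coef_map coef_poly ltn_ord /=.
by rewrite fmorph_div /= rmorph_int rmorph_nat.
Qed.

Lemma P_noneis (n : nat) (a : int) (th : algC) (p : nat) (c : nat -> int) :
  (0 < n)%N -> th ^+ n = a%:~R -> irreducible_poly (Gp n a) -> prime p ->
  ~~ (p %| `|a|)%N -> ~~ (p %| n)%N -> a != 0 ->
  (\sum_(i < n) (c i)%:~R * th ^+ i) / p%:R \in Aint ->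
  forall j, (j < n)%N -> (p%:Z %| c j)%Z.
Proof.
move=> n0 Hth irr pp pa pn a0 yA j jn.
have [z zp] := C_prim_root_exists n0.
have zA := Aint_prim_root zp.
have p0 : (p%:R : algC) != 0 by rewrite pnatr_eq0 -lt0n prime_gt0.
set g := \poly_(i < n) ((c i)%:~R / p%:R : rat).
have gth : (map_poly ratr g).[th] \in Aint.
  rewrite horner_pdiv; move: yA; rewrite mulr_suml.
  by rewrite (eq_bigr (fun i : 'I_n => (c i)%:~R / p%:R * th ^+ i)) // => i _; rewrite mulrAC.
have YA k : \sum_(i < n) (c i)%:~R / p%:R * (z ^+ k * th) ^+ i \in Aint.
  rewrite -horner_pdiv; apply: (conj_Aint irr Hth _ gth).
  have zk : (z ^+ k) ^+ n = 1 by rewrite exprAC (prim_expr_order zp); apply: expr1n.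
  by rewrite exprMn zk mul1r.
have SA : \sum_(k < n) z ^+ (k * (n - j)) *
   (\sum_(i < n) (c i)%:~R / p%:R * (z ^+ k * th) ^+ i) \in Aint.
  by apply: rpred_sum => k _; rewrite rpredM ?rpredX.
have ES : \sum_(k < n) z ^+ (k * (n - j)) *
   (\sum_(i < n) (c i)%:~R / p%:R * (z ^+ k * th) ^+ i) =
   (c j)%:~R / p%:R * th ^+ j * n%:R.
  rewrite (eq_bigr (fun k : 'I_n => \sum_(i < n)
       (c i)%:~R / p%:R * th ^+ i * (z ^+ (i + (n - j))) ^+ k)); last first.
    move=> k _; rewrite mulr_sumr; apply: eq_bigr => i _.
    rewrite exprMn -!exprM (mulnC k i) (mulnC k (n - j)%N) mulnDl exprD; ring.
  rewrite exchange_big /=.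
  rewrite (eq_bigr (fun i : 'I_n => (c i)%:~R / p%:R * th ^+ i *
       (if (i == Ordinal jn) then n%:R else 0))); last first.
    move=> i _; rewrite -mulr_sumr unity_sum // dvd_shift //.
  rewrite (bigD1 (Ordinal jn)) //= eqxx big1 ?addr0 // => i /negbTE -> .
  by rewrite mulr0.
rewrite ES in SA.
have SnA := rpredX n SA.
apply: (@fin p n (c j) ((n%:Z) ^+ n * a ^+ j) pp).
- by rewrite mulf_neq0 ?expf_neq0 // -lt0n.
- have ap : (0 < `|a|)%N by rewrite absz_gt0.
  rewrite abszM !abszX lognM ?expn_gt0 ?n0 ?ap //.
  rewrite lognX lognX (@logn_coprime p n) ?prime_coprime //.
  by rewrite (@logn_coprime p `|a|) ?prime_coprime // !muln0.
have E : ((c j)%:~R / p%:R * th ^+ j * n%:R) ^+ n =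
   (c j)%:~R ^+ n * ((n%:Z) ^+ n * a ^+ j)%:~R / p%:R ^+ n :> algC.
  rewrite !exprMn -exprM mulnC exprM Hth rmorphM /= !rmorphXn /= natzR exprVn; ring.

by rewrite E in SnA.
Qed.

Lemma P_all (n : nat) (a : int) (th : algC) (p : nat) (c : nat -> int) :
  (0 < n)%N -> th ^+ n = a%:~R -> irreducible_poly (Gp n a) -> squarefree_int a ->
  (forall q : nat, prime q -> (q %| n)%N -> (q%:Z %| a)%Z) -> th \in Aint -> prime p ->
  (\sum_(i < n) (c i)%:~R * th ^+ i) / p%:R \in Aint ->
  forall j, (j < n)%N -> (p%:Z %| c j)%Z.
Proof.
move=> n0 Hth irr [a0 sqf] hn thA pp yA.
case: (boolP (p %| `|a|)%N) => pa.
  by apply: (P_eis n0 Hth pp _ (sqf p pp) a0 thA yA); rewrite dvdzE.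
apply: (P_noneis n0 Hth irr pp pa _ a0 yA).
by apply: contra pa => /(hn p pp); rewrite dvdzE.
Qed.

Lemma C_ind (n : nat) (a : int) (th : algC) :
  (0 < n)%N -> th ^+ n = a%:~R -> irreducible_poly (Gp n a) -> squarefree_int a ->
  (forall q : nat, prime q -> (q %| n)%N -> (q%:Z %| a)%Z) -> th \in Aint ->
  forall D : nat, (0 < D)%N -> forall c : nat -> int,
  (\sum_(i < n) (c i)%:~R * th ^+ i) / D%:R \in Aint ->
  forall j, (j < n)%N -> (D%:Z %| c j)%Z.
Proof.
move=> n0 Hth irr sqf hn thA.
elim/ltn_ind => D IH D0 c yA j jn.
case: (D =P 1%N) => [-> | D1]; first by rewrite dvd1z.
have D1' : (1 < D)%N by move: D0 D1; lia.
set p := pdiv D.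
have pp : prime p := pdiv_prime D1'.
have [D' ED] : exists D', D = (D' * p)%N by exists (D %/ p)%N; rewrite divnK ?pdiv_dvd.
have D'0 : (0 < D')%N by move: D0; rewrite ED muln_gt0 => /andP[].
have p0 : (p%:R : algC) != 0 by rewrite pnatr_eq0 -lt0n prime_gt0.
have D'0' : (D'%:R : algC) != 0 by rewrite pnatr_eq0 -lt0n.
have ypA : (\sum_(i < n) (c i)%:~R * th ^+ i) / p%:R \in Aint.
  have -> : (\sum_(i < n) (c i)%:~R * th ^+ i) / p%:R =
     D'%:R * ((\sum_(i < n) (c i)%:~R * th ^+ i) / D%:R).
    by rewrite ED natrM; field; rewrite D'0' p0.
  by rewrite rpredM ?rpred_nat.
have pc := P_all n0 Hth irr sqf hn thA pp ypA.
set c' := fun i => (c i %/ p%:Z)%Z.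
have Ec i : (i < n)%N -> c i = c' i * p%:Z by move=> il; rewrite divzK ?pc.
have y'A : (\sum_(i < n) (c' i)%:~R * th ^+ i) / D'%:R \in Aint.
  have -> : (\sum_(i < n) (c' i)%:~R * th ^+ i) / D'%:R =
     (\sum_(i < n) (c i)%:~R * th ^+ i) / D%:R.
    rewrite ED natrM mulrC [RHS]mulrC !mulr_sumr.
    apply: eq_bigr => i _; rewrite (Ec i (ltn_ord i)) rmorphM /= natzR.
    field; rewrite D'0' p0 //.
  exact: yA.
have D'D : (D' < D)%N by rewrite ED ltn_Pmulr // prime_gt1.
have := IH D' D'D D'0 c' y'A j jn.
rewrite (Ec j jn) ED PoszM => H.
by apply: dvdz_mul.
Qed.

Lemma M_int (n : nat) (a : int) (th : algC) (g : nat -> rat) :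
  (0 < n)%N -> th ^+ n = a%:~R -> irreducible_poly (Gp n a) -> squarefree_int a ->
  (forall q : nat, prime q -> (q %| n)%N -> (q%:Z %| a)%Z) -> th \in Aint ->
  \sum_(i < n) ratr (g i) * th ^+ i \in Aint ->
  forall j, (j < n)%N -> exists k : int, g j = k%:~R.
Proof.
move=> n0 Hth irr sqf hn thA yA.
set d := fun i => `|denq (g i)|%N.
have Ed i : (d i)%:R = (denq (g i))%:~R :> rat.
  by rewrite -natzR /d abszE gtr0_norm ?denq_gt0.
set D := (\prod_(i < n) d i)%N.
have D0 : (0 < D)%N by apply: prodn_gt0 => i; rewrite absz_gt0 denq_neq0.
have dD i : (i < n)%N -> (d i %| D)%N.
  by move=> il; rewrite /D (bigD1 (Ordinal il)) //= dvdn_mulr.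
set c := fun i => numq (g i) * ((D %/ d i)%N)%:Z.
have Ec i : (i < n)%N -> (c i)%:~R = g i * D%:R :> rat.
  move=> il; rewrite /c rmorphM /= numqE natzR -mulrA -Ed -natrM.
  by rewrite mulnC divnK ?dD.
have D0' : (D%:R : algC) != 0 by rewrite pnatr_eq0 -lt0n.
have cA : (\sum_(i < n) (c i)%:~R * th ^+ i) / D%:R \in Aint.
  suff -> : (\sum_(i < n) (c i)%:~R * th ^+ i) / D%:R =
     \sum_(i < n) ratr (g i) * th ^+ i by [].
  rewrite mulr_suml; apply: eq_bigr => i _.
  have -> : ((c i)%:~R : algC) = ratr ((c i)%:~R : rat) by rewrite rmorph_int.
  rewrite Ec // rmorphM /= rmorph_nat; field; exact: D0'.
move=> j jn.
have /dvdzP[k Ek] := C_ind n0 Hth irr sqf hn thA D0 cA jn.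
exists k.
have D0r : (D%:R : rat) != 0 by rewrite pnatr_eq0 -lt0n.
apply: (mulIf D0r); rewrite -Ec // Ek rmorphM /= natzR.
by [].
Qed.

Lemma bez (u n : nat) : (1 < n)%N -> (1 < u)%N -> coprime u n ->
  exists v k, [/\ (v < n)%N, (0 < k)%N & (u * v = k * n + 1)%N].
Proof.
move=> n1 u1 cun.
have u0 : (0 < u)%N by apply: ltnW.
case: (egcdnP n u0) => km kn E _.
move: E; rewrite (eqP cun) => E.
set v := (km %% n)%N.
have Em : ((u * v) %% n = 1)%N.
  by rewrite /v modnMmr mulnC E modnMDl modn_small.
exists v, ((u * v) %/ n)%N; split.
- by rewrite /v ltn_pmod // ltnW.
- rewrite lt0n; apply/negP => /eqP k0.
  have := divn_eq (u * v) n; rewrite k0 Em mul0n add0n => /eqP.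
  by rewrite muln_eq1 => /andP[/eqP u1' _]; move: u1; rewrite u1'.
- by rewrite {1}(divn_eq (u * v) n) Em.
Qed.

Lemma root_GpE n b (w : algC) : root (map_poly ratr (Gp n b)) w -> w ^+ n = b%:~R.
Proof. by rewrite map_Gp rootE !hornerE subr_eq0 => /eqP. Qed.

Theorem theorem2p7 (n u : nat) (a : int) :
  (3 <= n)%N -> (2 <= u)%N -> coprime u n -> squarefree_int a ->
  (forall p : nat, prime p -> (p %| n)%N -> (p%:Z %| a)%Z) ->
  irreducible_poly (Fpoly n u a) /\
  (forall alpha : algC, root (map_poly ratr (Fpoly n u a)) alpha ->
     ~ (forall x, ZK alpha x <-> Zadj alpha x) /\
     exists theta : algC, ZK alpha theta /\
       (forall x, Qadj alpha x <-> Qadj theta x) /\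
       (forall x, ZK alpha x <-> Zadj theta x)).
Proof.
move=> n3 u2 cun sqf hn.
have n0 : (0 < n)%N by apply: leq_trans n3.
have n1 : (1 < n)%N by apply: leq_trans n3.
have [a0 sqa] := sqf.
set p0 := pdiv n.
have pp0 : prime p0 := pdiv_prime n1.
have p0a : (p0%:Z %| a)%Z := hn p0 pp0 (pdiv_dvd n).
have irrF : irreducible_poly (Gp n (a ^+ u)) := irr_pure n0 cun pp0 p0a (sqa p0 pp0) a0.
have irrG : irreducible_poly (Gp n a).
  by have := irr_pure n0 (coprime1n n) pp0 p0a (sqa p0 pp0) a0; rewrite expr1.
split; first exact: irrF.
move=> alpha ra.
have Ha : alpha ^+ n = (a ^+ u)%:~R := root_GpE ra.
have [v [k [vn k0 Euv]]] := bez n1 u2 cun.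
have aC0 : (a%:~R : algC) != 0 by rewrite intr_eq0.
set th := alpha ^+ v / (a%:~R) ^+ k.
have Hth : th ^+ n = a%:~R.
  rewrite /th expr_div_n -exprM mulnC exprM Ha rmorphXn /= -exprM Euv exprD expr1.
  rewrite -exprM mulnC; field; by rewrite expf_neq0.
have Hu : th ^+ u = alpha.
  rewrite /th expr_div_n -exprM mulnC Euv exprD expr1 mulnC exprM Ha rmorphXn /=.
  rewrite -!exprM mulnC; field; by rewrite expf_neq0.
have thA : th \in Aint.
  apply: (@root_monic_Aint ('X^n - (a%:~R)%:P)).
  - by rewrite rootE !hornerE Hth subrr.
  - exact: monicXnsubC.
  - by rewrite polyOverXnsubC intr_int.
set q0 : {poly rat} := ((a%:~R) ^- k) *: 'X^v.
have Eq0 : (map_poly ratr q0).[alpha] = th.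
  rewrite /q0 map_polyZ /= map_polyXn hornerZ hornerXn.
  by rewrite fmorphV /= rmorphXn /= rmorph_int mulrC.
have QQ x : Qadj alpha x <-> Qadj th x.
  split => -[q ->].
    exists (q \Po 'X^u); by rewrite map_comp_poly horner_comp map_polyXn hornerXn Hu.
  exists (q \Po q0); by rewrite map_comp_poly horner_comp Eq0.
have ZKth : ZK alpha th.
  split; last exact: thA.
  by exists q0; rewrite Eq0.
split.
  move=> H; have [P EP] := (H th).1 ZKth.
  set Fi : {poly int} := 'X^n - (a ^+ u)%:P.
  have monFi : Fi \is monic by apply: monicXnsubC.
  set R := Pdiv.Ring.rmodp P Fi.
  have szR : (size R <= n)%N.
    have := Pdiv.Ring.ltn_rmodp P Fi; rewrite monic_neq0 // size_XnsubC //.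
  have EPR : (map_poly intr P).[alpha] = (map_poly intr R).[alpha] :> algC.
    rewrite {1}(Pdiv.RingMonic.rdivp_eq monFi P) rmorphD rmorphM /= hornerD hornerM.
    rewrite /Fi rmorphB /= map_polyXn map_polyC /= !hornerE Ha subrr mulr0 add0r.
    by [].
  set d : {poly rat} := map_poly intr R - q0.
  have mapR : map_poly (ratr : rat -> algC) (map_poly intr R) = map_poly intr R.
    rewrite -map_poly_comp; apply: eq_map_poly => z /=; exact: rmorph_int.
  have droot : root (map_poly ratr d) alpha.
    by rewrite /root /d rmorphB /= hornerD hornerN Eq0 mapR -EPR -EP subrr.
  have d0 : d = 0.
    apply/eqP; apply/negPn/negP => dn0.
    have := dvdp_leq dn0 (irr_root_dvd irrF ra droot).
    rewrite size_XnsubC // => H1.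
    have : (size d <= n)%N.
      rewrite /d (leq_trans (size_add _ _)) // geq_max size_opp.
      rewrite size_map_inj_poly ?szR //=; last exact: intr_inj.
      rewrite /q0 (leq_trans (size_scale_leq _ _)) // size_polyXn //.
    by move=> H2; move: (leq_trans H1 H2); rewrite ltnn.
  have Ev : (R`_v)%:~R = ((a%:~R) ^- k : rat).
    have := congr1 (fun p : {poly rat} => p`_v) d0.
    rewrite /d coefB coef_map /= /q0 coefZ coefXn eqxx mulr1 coef0.
    by move/eqP; rewrite subr_eq0 => /eqP.
  have E1 : R`_v * a ^+ k = 1.
    apply: (@intr_inj rat); rewrite rmorph1 rmorphM /= Ev rmorphXn /= mulVf //.
    by rewrite expf_neq0 // intr_eq0.
  have := congr1 absz E1; rewrite abszM abszX /= => /eqP.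
  rewrite muln_eq1 => /andP[_]; rewrite -(exp1n k) eqn_exp2r // => /eqP a1.
  by move: p0a; rewrite dvdzE a1 dvdn1 /= => /eqP p01; move: pp0; rewrite p01.
exists th; split; first exact: ZKth.
split; first exact: QQ.
move=> x; split.
  move=> [/QQ [q Eq] xA].
  have [c Ec] := reduce q n0 Hth.
  rewrite Eq Ec in xA.
  have Mi := M_int n0 Hth irrG sqf hn thA xA.
  exists (\poly_(i < n) numq (c i)).
  rewrite Eq Ec (@horner_coef_wide _ n); last first.
    rewrite size_map_inj_poly ?size_poly //; first exact: intr_inj.
  apply: eq_bigr => i _; rewrite coef_map coef_poly ltn_ord /=.
  have [m ->] := Mi i (ltn_ord i).
  by rewrite numq_int rmorph_int.
move=> [P ->]; split.
  apply/QQ; exists (map_poly intr P).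
  rewrite -map_poly_comp; congr (_.[_]); apply: eq_map_poly => z /=.
  by rewrite rmorph_int.
rewrite horner_coef; apply: rpred_sum => i _.
by rewrite coef_map rpredM ?Aint_int ?rpredX.
Qed.
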